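(* Let $k\geq 3$ and $n\geq 2k+1$, and write $A=A_n$. The complex $\partial B_A$ contains, as facets, all of the following sets: 1. $[i,i+1]\cup H\cup\{n-i+1\}$, where $1\leq i\leq \lfloor n/2\rfloor-k+1$ and $H\in\mathcal F_{2k-4}^{[i+2,n-i]}$; 2. $[i,i+1]\cup H\cup\{n-i-1\}$, where $1\leq i\leq \lfloor n/2\rfloor-k+1$ and $H\in\mathcal F_{2k-4}^{[i+2,n-i-2]}$; 3. $\{i+1\}\cup H\cup[n-i,n-i+1]$, where $1\leq i\leq \lfloor n/2\rfloor-k+1$ and $H\in\mathcal F_{2k-4}^{[i+2,n-i-1]}$; 4. $\{i\}\cup H\cup[n-i-1,n-i]$, where $1\leq i\leq \lfloor n/2\rfloor-k+1$ and $H\in\mathcal F_{2k-4}^{[i+2,n-i-2]}$; 5. $\{1\}\cup H\cup[n-1,n]$, where $H\in\mathcal F_{2k-4}^{[2,n-2]}$; 6. $\{\lfloor n/2\rfloor-k+2\}\cup H$, where $H\in\mathcal F_{2k-2}^{[\lfloor n/2\rfloor-k+3,\ \lceil n/2\rceil+k]}$.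
   Context: For integers $m\leq n$, $[m,n]=\{m,m+1,\dots,n\}$. For $j\geq 1$, $\mathcal F_{2j}^{[m,n]}$ is the set of all $2j$-sets of the form $\{i_1,i_1+1,i_2,i_2+1,\dots,i_j,i_j+1\}$ with $m\leq i_1$, $i_j+1\leq n$, and $i_t\leq i_{t+1}-2$ for $1\leq t\leq j-1$. It is partially ordered by $\leq_p$: for $2j$-sets $X=\{x_1<\dots<x_{2j}\}$, $Y=\{y_1<\dots<y_{2j}\}$, $X\leq_p Y$ iff $x_t\leq y_t$ for all $t$. For an antichain $S$ of $\mathcal F_{2k}^{[1,n]}$, $B(S)$ is the pure simplicial complex whose facets are the elements of the order ideal of $(\mathcal F_{2k}^{[1,n]},\leq_p)$ generated by $S$. Let $S-\mathbf 1_{2k}=\{\{x_1-1,x_1,\dots,x_k-1,x_k\}:\{x_1,x_1+1,\dots,x_k,x_k+1\}\in S,\ x_1>1\}$, and let $B_S$ be the pure complex whose facets are the facets of $B(S)$ that are not facets of $B(S-\mathbf 1_{2k})$; $B_S$ is a PL $(2k-1)$-ball and $\partial B_S$ (the complex generated by the $(2k-2)$-faces of $B_S$ lying in exactly one facet of $B_S$) is a PL $(2k-2)$-sphere. Fix $k\geq3$ and define the antichain $A_n=\{F_1,\dots,F_{\lfloor n/2\rfloor-k+1}\}$ with $F_i=[i,i+1]\cup[n-2k+4-i,\,n-i+1]$. *)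

(* Defs.v *)
(* Finite sets of naturals are represented canonically by
   strictly increasing lists (seq nat sorted by ltn). *)
From mathcomp Require Import all_boot.
Set Implicit Arguments. Unset Strict Implicit. Unset Printing Implicit Defensive.

Definition itv (a b : nat) : seq nat := iota a (b.+1 - a).

Definition is_set (X : seq nat) : Prop := sorted ltn X.

Definition sunion (X Y : seq nat) : seq nat := sort leq (undup (X ++ Y)).

Definition pairs_of (s : seq nat) : seq nat := flatten [seq [:: i; i.+1] | i <- s].

(* inF j m n X  <->  X \in F_{2j}^{[m,n]}:
   X = {i_1,i_1+1,...,i_j,i_j+1}, m <= i_1, i_j + 1 <= n, i_t <= i_{t+1} - 2 *)
Definition inF (j m n : nat) (X : seq nat) : Prop :=
  exists s : seq nat,
    [/\ size s = j, sorted (fun a b => a.+2 <= b) s,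
        all (fun i => (m <= i) && (i.+1 <= n)) s & X = pairs_of s].

(* X <=_p Y for sets of equal size (compared via sorted enumerations) *)
Definition le_p (X Y : seq nat) : bool := all2 leq X Y.

(* facets of B(S): the order ideal of (F_{2k}^{[1,n]}, <=_p) generated by S *)
Definition B_facet (k n : nat) (S : seq (seq nat)) (X : seq nat) : Prop :=
  inF k 1 n X /\ exists2 Y, Y \in S & le_p X Y.

Definition shift1 (S : seq (seq nat)) : seq (seq nat) :=
  [seq map predn Y | Y <- S & 1 < head 0 Y].

Definition BS_facet (k n : nat) (S : seq (seq nat)) (X : seq nat) : Prop :=
  B_facet k n S X /\ ~ B_facet k n (shift1 S) X.

Definition BS_bridge (k n : nat) (S : seq (seq nat)) (R : seq nat) : Prop :=
  [/\ is_set R, size R = (2 * k).-1,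
      exists2 F, BS_facet k n S F & {subset R <= F}
    & forall F1 F2, BS_facet k n S F1 -> BS_facet k n S F2 ->
        {subset R <= F1} -> {subset R <= F2} -> F1 = F2].

Definition bdry_face (k n : nat) (S : seq (seq nat)) (X : seq nat) : Prop :=
  is_set X /\ exists2 R, BS_bridge k n S R & {subset X <= R}.

Definition is_facet (C : seq nat -> Prop) (X : seq nat) : Prop :=
  C X /\ forall Y, C Y -> {subset X <= Y} -> {subset Y <= X}.

Definition A_n (k n : nat) : seq (seq nat) :=
  [seq sunion (itv i i.+1) (itv (n - 2 * k + 4 - i) (n - i + 1))
  | i <- itv 1 (n./2 - k + 1)].

(* Main.v *)
Require Import Defs.
From mathcomp Require Import all_boot.
From mathcomp Require Import zify.
Set Implicit Arguments. Unset Strict Implicit. Unset Printing Implicit Defensive.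

Lemma pairs_cons i s : pairs_of (i :: s) = i :: i.+1 :: pairs_of s.
Proof. by []. Qed.

Lemma size_pairs s : size (pairs_of s) = 2 * size s.
Proof. elim: s => // i s IH; rewrite pairs_cons /= IH; lia. Qed.

Lemma mem_pairsP t s : t \in pairs_of s -> exists2 i, i \in s & (t = i \/ t = i.+1).
Proof.
elim: s => // i s IH; rewrite pairs_cons !inE => /orP[/eqP->|/orP[/eqP->|/IH[j js h]]].
- by exists i; rewrite ?inE ?eqxx //; left.
- by exists i; rewrite ?inE ?eqxx //; right.
- by exists j => //; rewrite inE js orbT.
Qed.

Lemma mem_pairs_i i s : i \in s -> (i \in pairs_of s) && (i.+1 \in pairs_of s).
Proof.
elim: s => // j s IH; rewrite pairs_cons !inE => /orP[/eqP->|/IH/andP[h1 h2]].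
- by rewrite !eqxx !orbT.
- by rewrite h1 h2 !orbT.
Qed.

Lemma par_lt s y : y \notin pairs_of s -> ~~ odd (count (fun t => t < y) (pairs_of s)).
Proof.
elim: s => // i s IH; rewrite pairs_cons !inE !negb_or => /and3P[/eqP h1 /eqP h2 h3] /=.
move: (IH h3); lia.
Qed.

Lemma par_gt s y : y \notin pairs_of s -> ~~ odd (count (fun t => y < t) (pairs_of s)).
Proof.
elim: s => // i s IH; rewrite pairs_cons !inE !negb_or => /and3P[/eqP h1 /eqP h2 h3] /=.
move: (IH h3); lia.
Qed.

Lemma sorted_pairs s : sorted (fun a b => a.+2 <= b) s -> sorted ltn (pairs_of s).
Proof.
case: s => // i s /=.
elim: s i => [|j s IH] i /=; first by rewrite andbT.
case/andP=> hij hp; rewrite ltnSn /=.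
have -> : i.+1 < j by lia.
exact: IH.
Qed.

Lemma inF_facts j lo hi X : inF j lo hi X ->
  [/\ sorted ltn X, size X = 2 * j, (forall t, t \in X -> lo <= t <= hi),
      (forall y, y \notin X -> ~~ odd (count (fun t => t < y) X)) &
      (forall y, y \notin X -> ~~ odd (count (fun t => y < t) X))].
Proof.
case=> s [hs hso hall ->]; split.
- exact: sorted_pairs.
- by rewrite size_pairs hs.
- move=> t /mem_pairsP [i ins ht]; move/allP: hall => /(_ i ins) /andP[h1 h2]; lia.
- exact: par_lt.
- exact: par_gt.
Qed.

Lemma cnt0 y r : all (fun t => y <= t) r -> count (fun t => t < y) r = 0.
Proof. elim: r => //= a r IH /andP[h1 h2]; rewrite IH //; lia. Qed.

Lemma build_aux N X : size X <= N -> sorted ltn X ->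
  (forall y, y \notin X -> ~~ odd (count (fun t => t < y) X)) ->
  exists s, sorted (fun a b => a.+2 <= b) s /\ X = pairs_of s.
Proof.
elim: N X => [|N IH] [|x1 [|x2 r]] //=; try by exists [::].
- move=> _ _ /(_ x1.+1); rewrite !inE /=; lia.
- move=> hsz /andP[h12 hp] hpar.
  have allr : all (fun t => x2 < t) r by apply: (order_path_min ltn_trans).
  have e2 : x2 = x1.+1.
    case: (ltngtP x2 x1.+1) => // h; first lia.
    move: (hpar x1.+1); rewrite !inE cnt0 /=; last first.
      by apply/allP => t /(allP allr); lia.
    have -> : (x1.+1 \in r) = false.
      by apply/negbTE/negP => /(allP allr); lia.
    lia.
  have sr : sorted ltn r by apply: path_sorted hp.
  have hsr : size r <= N by lia.
  have hpr : forall y, y \notin r -> ~~ odd (count (fun t => t < y) r).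
    move=> y yr.
    case: (boolP ((y == x1) || (y == x1.+1))) => hy.
      rewrite cnt0 //; apply/allP => t /(allP allr); move: hy; lia.
    have : y \notin [:: x1, x2 & r] by rewrite !inE e2 (negbTE yr) orbF.
    move/hpar => /=; lia.
  have [s' [hs' er]] := IH r hsr sr hpr.
  exists (x1 :: s'); split; last by rewrite e2 er.
  case: s' hs' er => // i s'' hs'' er /=; apply/andP; split; last exact: hs''.
  have : i \in r by rewrite er pairs_cons inE eqxx.
  move/(allP allr); lia.
Qed.

Lemma inF_intro j lo hi X : sorted ltn X ->
  (forall y, y \notin X -> ~~ odd (count (fun t => t < y) X)) ->
  size X = 2 * j -> (forall t, t \in X -> lo <= t <= hi) -> inF j lo hi X.
Proof.
move=> so hpar hsz hr.
have [s [hs eX]] := build_aux (leqnn _) so hpar; subst X.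
exists s; split => //.
- by move: hsz; rewrite size_pairs; lia.
- apply/allP => i /mem_pairs_i /andP[h1 h2].
  by move: (hr _ h1) (hr _ h2); lia.
Qed.

Lemma mem_sunion X Y t : (t \in sunion X Y) = (t \in X) || (t \in Y).
Proof. by rewrite /sunion mem_sort mem_undup mem_cat. Qed.

Lemma sorted_sunion X Y : sorted ltn (sunion X Y).
Proof.
by rewrite ltn_sorted_uniq_leq sort_uniq undup_uniq sort_sorted //; exact: leq_total.
Qed.

Lemma count_sunion (p : pred nat) X Y : uniq X -> uniq Y ->
  (forall t, t \in X -> t \notin Y) ->
  count p (sunion X Y) = count p X + count p Y.
Proof.
move=> uX uY dXY.
have uXY : uniq (X ++ Y).
  rewrite cat_uniq uX uY /= andbT; apply/hasPn => t tY; apply/negP => tX.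
  by move: (dXY t tX); rewrite tY.
have hp : perm_eq (sort leq (undup (X ++ Y))) (undup (X ++ Y)) by rewrite perm_sort perm_refl.
by rewrite /sunion (permP hp) undup_id // count_cat.
Qed.

Lemma size_sunion X Y : uniq X -> uniq Y ->
  (forall t, t \in X -> t \notin Y) -> size (sunion X Y) = size X + size Y.
Proof. by move=> *; rewrite -!count_predT count_sunion. Qed.

Lemma uniq_sunion X Y : uniq (sunion X Y).
Proof. exact: (sorted_uniq ltn_trans ltnn (sorted_sunion X Y)). Qed.

Lemma itv2 a : itv a a.+1 = [:: a; a.+1].
Proof. by rewrite /itv subSn // subSnn. Qed.

Lemma all2_iota_bound s c : all2 leq s (iota c (size s)) ->
  forall t, t \in s -> t < c + size s.
Proof.
elim: s c => // x s IH c /= /andP[hx h] t; rewrite inE => /orP[/eqP->|ts]; first lia.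
by move: (IH _ h t ts); lia.
Qed.

Lemma path_size_bound x s B : path ltn x s -> (forall t, t \in x :: s -> t < B) ->
  x + size s < B.
Proof.
elim: s x => [|y s IH] x /=; first by move=> _ /(_ x); rewrite inE eqxx; lia.
case/andP=> hxy hp hB.
have : y + size s < B by apply: IH => // t ts; apply: hB; rewrite inE ts orbT.
lia.
Qed.

Lemma iota_all2 s c : sorted ltn s -> (forall t, t \in s -> t < c + size s) ->
  all2 leq s (iota c (size s)).
Proof.
elim: s c => // x s IH c /= hp hB.
have := path_size_bound hp hB => /= h.
apply/andP; split; first lia.
apply: IH; first exact: path_sorted hp.
by move=> t ts; move: (hB t); rewrite inE ts orbT => /(_ isT); lia.
Qed.

Lemma map_pred_iota c L : map predn (iota c.+1 L) = iota c L.
Proof. by elim: L c => //= L IH c; rewrite IH. Qed.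

Definition Fj (k n j : nat) := j :: j.+1 :: iota (n - 2 * k + 4 - j) (2 * k - 2).

Lemma sorted_cons_iota x c L : x < c -> sorted ltn (x :: iota c L).
Proof. by case: L => //= L hx; rewrite hx; exact: (iota_ltn_sorted c L.+1). Qed.

Lemma Fj_eq k n j : 3 <= k -> 2 * k + 1 <= n -> 1 <= j <= n./2 - k + 1 ->
  sunion (itv j j.+1) (itv (n - 2 * k + 4 - j) (n - j + 1)) = Fj k n j.
Proof.
move=> hk hn hj; rewrite itv2 /itv.
have -> : (n - j + 1).+1 - (n - 2 * k + 4 - j) = 2 * k - 2 by lia.
have so : sorted ltn (Fj k n j).
  rewrite /Fj /= ltnSn /=; apply: sorted_cons_iota; lia.
have uF := sorted_uniq ltn_trans ltnn so.
rewrite /sunion.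
have -> : [:: j; j.+1] ++ iota (n - 2 * k + 4 - j) (2 * k - 2) = Fj k n j by [].
rewrite undup_id //.
apply: (sorted_sort leq_trans).
by move: so; rewrite ltn_sorted_uniq_leq => /andP[].
Qed.

Lemma memA k n Y : 3 <= k -> 2 * k + 1 <= n -> Y \in A_n k n ->
  exists2 j, 1 <= j <= n./2 - k + 1 & Y = Fj k n j.
Proof.
move=> hk hn /mapP [j hj ->]; move: hj; rewrite mem_iota => hj.
have hj' : 1 <= j <= n./2 - k + 1 by lia.
by exists j => //; rewrite Fj_eq.
Qed.

Lemma FjA k n j : 3 <= k -> 2 * k + 1 <= n -> 1 <= j <= n./2 - k + 1 ->
  Fj k n j \in A_n k n.
Proof.
move=> hk hn hj; rewrite -Fj_eq //; apply: (map_f (fun i => sunion (itv i i.+1) (itv (n - 2 * k + 4 - i) (n - i + 1)))).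
rewrite mem_iota; lia.
Qed.

Lemma memS k n Y : 3 <= k -> 2 * k + 1 <= n -> Y \in shift1 (A_n k n) ->
  exists2 j, 2 <= j <= n./2 - k + 1 & Y = map predn (Fj k n j).
Proof.
move=> hk hn /mapP [Y' hY' ->]; move: hY'; rewrite mem_filter => /andP[h1 /memA].
case/(_ hk hn) => j hj eY; subst Y'.
by exists j => //; move: h1 hj; rewrite /Fj /=; lia.
Qed.

Lemma FjS k n j : 3 <= k -> 2 * k + 1 <= n -> 2 <= j <= n./2 - k + 1 ->
  map predn (Fj k n j) \in shift1 (A_n k n).
Proof.
move=> hk hn hj; apply: map_f; rewrite mem_filter FjA /=; lia.
Qed.

Lemma predFj k n j : 3 <= k -> 2 * k + 1 <= n -> 2 <= j <= n./2 - k + 1 ->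
  map predn (Fj k n j) = j.-1 :: j :: iota (n - 2 * k + 3 - j) (2 * k - 2).
Proof.
move=> hk hn hj; rewrite /Fj /=.
have -> : n - 2 * k + 4 - j = (n - 2 * k + 3 - j).+1 by lia.
by rewrite map_pred_iota.
Qed.

Lemma inF_dec k n F : 3 <= k -> inF k 1 n F -> exists j0, exists P,
  [/\ F = j0 :: j0.+1 :: P, sorted ltn P, size P = 2 * k - 2, 1 <= j0 &
      (forall t, t \in P -> j0.+1 < t <= n)].
Proof.
move=> hk hF; have [so sz rng _ _] := inF_facts hF.
case: hF => [[|j0 s] [hs _ _ eF]]; first by move: hs => /= hs; lia.
exists j0, (pairs_of s); rewrite eF pairs_cons in so sz rng *.
have a1 : all (ltn j0.+1) (pairs_of s).
  by move: so => /= /andP[_ hp]; apply: (order_path_min ltn_trans).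
split => //.
- by move: so => /= /andP[_ /path_sorted].
- by move: sz => /=; lia.
- by move: (rng j0); rewrite inE eqxx => /(_ isT); lia.
- move=> t tP; move: (rng t) (allP a1 t tP); rewrite !inE tP !orbT => /(_ isT); lia.
Qed.

Lemma inF_min n F j0 P : F = j0 :: j0.+1 :: P -> (forall t, t \in P -> j0.+1 < t <= n) ->
  forall a, a \in F -> (forall t, t \in F -> a <= t) -> a = j0.
Proof.
move=> -> hP a aF hmin; move: (hmin j0); rewrite inE eqxx => /(_ isT) h1.
move: aF h1; rewrite !inE => /orP[/eqP->//|/orP[/eqP->|/hP]]; lia.
Qed.

Lemma BS_intro k n F a b : 3 <= k -> 2 * k + 1 <= n -> inF k 1 n F ->
  a \in F -> b \in F -> (forall t, t \in F -> a <= t <= b) ->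
  a <= n./2 - k + 1 -> a + b <= n + 1 -> (a = n./2 - k + 1 \/ n <= a + b) ->
  BS_facet k n (A_n k n) F.
Proof.
move=> hk hn hF aF bF hab h1 h2 h3.
have [j0 [P [eF soP szP j01 hP]]] := inF_dec hk hF.
have ea : a = j0 by apply: (inF_min eF hP) => // t /hab /andP[].
subst a.
have hPb : forall t, t \in P -> t <= b.
  by move=> t tP; move: (hab t); rewrite eF !inE tP !orbT => /(_ isT) /andP[].
split.
- split => //; exists (Fj k n j0); first by apply: FjA => //; lia.
  rewrite eF /le_p /Fj /= leqnn ltnSn /= -szP.
  apply: iota_all2 => // t tP; move: (hPb t tP); rewrite szP; lia.
- case=> _ [Y /memS [] // j hj eY].
  rewrite eY predFj // eF /le_p /= => /andP[hj0 /andP[_ hall]].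
  move: hall; rewrite -szP => /all2_iota_bound hbd.
  have hb : b <= n - j.
    move: bF; rewrite eF !inE => /orP[/eqP->|/orP[/eqP->|/hbd]]; rewrite ?szP; lia.
  lia.
Qed.

Lemma BS_elim k n F : 3 <= k -> 2 * k + 1 <= n -> BS_facet k n (A_n k n) F ->
  inF k 1 n F /\ forall a b, a \in F -> b \in F -> (forall t, t \in F -> a <= t <= b) ->
  [/\ a <= n./2 - k + 1, a + b <= n + 1 & (a = n./2 - k + 1 \/ n <= a + b)].
Proof.
move=> hk hn [[hF [Y hY hle]] hns]; split => // a b aF bF hab.
have [j0 [P [eF soP szP j01 hP]]] := inF_dec hk hF.
have ea : a = j0 by apply: (inF_min eF hP) => // t /hab /andP[].
subst a.
have hPb : forall t, t \in P -> t <= b.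
  by move=> t tP; move: (hab t); rewrite eF !inE tP !orbT => /(_ isT) /andP[].
have [j hj eY] := memA hk hn hY.
move: hle; rewrite eY eF /le_p /Fj /= => /andP[hj0 /andP[_ hall]].
move: hall; rewrite -szP => /all2_iota_bound hbd.
have hb : b <= n - j + 1.
  move: bF; rewrite eF !inE => /orP[/eqP->|/orP[/eqP->|/hbd]]; rewrite ?szP; lia.
split; try lia.
case: (leqP (n./2 - k + 1) j0) => hm; first lia.
case: (leqP n (j0 + b)) => hs; first by right.
exfalso; apply: hns; split => //.
exists (map predn (Fj k n j0.+1)); first by apply: FjS => //; lia.
rewrite predFj; try lia.
rewrite eF /le_p /= leqnn ltnSn /= -szP.
apply: iota_all2 => // t tP; move: (hPb t tP); rewrite szP; lia.
Qed.

Lemma ridge k n X x0 : 3 <= k -> 2 * k + 1 <= n -> is_set X -> size X = (2 * k).-1 ->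
  x0 \notin X -> BS_facet k n (A_n k n) (sunion X [:: x0]) ->
  (forall F, BS_facet k n (A_n k n) F -> {subset X <= F} -> x0 \in F) ->
  is_facet (bdry_face k n (A_n k n)) X.
Proof.
move=> hk hn sX szX x0X hF0 huniq.
have uX : uniq X := sorted_uniq ltn_trans ltnn sX.
have key : forall F, BS_facet k n (A_n k n) F -> {subset X <= F} -> (x0 :: X) =i F.
  move=> F hF XF; have [hF' _] := BS_elim hk hn hF.
  have [soF szF _ _ _] := inF_facts hF'.
  have u : uniq (x0 :: X) by rewrite /= x0X uX.
  have sub : {subset x0 :: X <= F}.
    by move=> t; rewrite inE => /orP[/eqP->|/XF]//; apply: huniq.
  have hsz : size F <= size (x0 :: X) by rewrite szF /= szX; lia.
  by have [_ e] := uniq_min_size u sub hsz.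
have hbr : BS_bridge k n (A_n k n) X.
  split => //.
  - by exists (sunion X [:: x0]) => // t tX; rewrite mem_sunion tX.
  - move=> F1 F2 h1 h2 s1 s2.
    have [[hF1 _] _] := h1; have [[hF2 _] _] := h2.
    have [so1 _ _ _ _] := inF_facts hF1; have [so2 _ _ _ _] := inF_facts hF2.
    apply: (irr_sorted_eq ltn_trans ltnn so1 so2) => t.
    by rewrite -(key _ h1 s1) -(key _ h2 s2).
split; first by split => //; exists X.
move=> Y [sY [R [sR szR _ _] YR]] XY t tY.
have XR : {subset X <= R} by move=> u /XY /YR.
have hsz : size R <= size X by rewrite szR szX.
have [_ eXR] := uniq_min_size uX XR hsz.
by rewrite eXR; apply: YR.
Qed.

Lemma minmax (s : seq nat) : s != [::] -> exists a b, [/\ a \in s, b \in s &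
  forall t, t \in s -> a <= t <= b].
Proof.
elim: s => // x [|y s] IH _.
  by exists x, x; split; rewrite ?inE ?eqxx // => t; rewrite inE => /eqP->; lia.
have [a [b [aS bS hab]]] := IH isT.
exists (minn x a), (maxn x b); split.
- by case: (leqP x a) => h; rewrite ?(minn_idPl (ltnW h)) ?(minn_idPl h) ?(minn_idPr (ltnW h)) inE ?eqxx ?aS ?orbT.
- by case: (leqP x b) => h; rewrite ?(maxn_idPr h) ?(maxn_idPl (ltnW h)) inE ?eqxx ?bS ?orbT.
- move=> t; rewrite inE => /orP[/eqP->|/hab]; lia.
Qed.

Lemma facet_extra k n X F : 3 <= k -> 2 * k + 1 <= n -> uniq X -> size X = (2 * k).-1 ->
  BS_facet k n (A_n k n) F -> {subset X <= F} ->
  exists x, [/\ x \notin X, 1 <= x <= n,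
    (forall t, (t \in F) = (t == x) || (t \in X)),
    (forall p : pred nat, count p F = p x + count p X) &
    [/\ (forall y, y \notin F -> ~~ odd (count (fun t => t < y) F)),
        (forall y, y \notin F -> ~~ odd (count (fun t => y < t) F)) &
        exists a b, [/\ a \in F, b \in F, (forall t, t \in F -> a <= t <= b) &
          [/\ a <= n./2 - k + 1, a + b <= n + 1 & (a = n./2 - k + 1 \/ n <= a + b)]]]].
Proof.
move=> hk hn uX szX hBS XF.
have [hF hcond] := BS_elim hk hn hBS.
have [soF szF rngF parl parg] := inF_facts hF.
have uF : uniq F := sorted_uniq ltn_trans ltnn soF.
case: (boolP (has (fun t => t \notin X) F)) => [/hasP [x xF xX]|/hasPn hn']; last first.
  have sub : {subset F <= X} by move=> t /hn' /negPn.
  by have := uniq_leq_size uF sub; rewrite szF szX; lia.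
have u : uniq (x :: X) by rewrite /= xX uX.
have sub : {subset x :: X <= F} by move=> t; rewrite inE => /orP[/eqP->|/XF].
have hsz : size F <= size (x :: X) by rewrite szF /= szX; lia.
have [_ e] := uniq_min_size u sub hsz.
have pe : perm_eq F (x :: X) by apply: uniq_perm => // t; rewrite e.
exists x; split => //.
- by move: (rngF x xF).
- by move=> t; rewrite -e inE.
- by move=> p; rewrite (permP pe) /=.
split => //.
have : F != [::] by case: (F) xF.
case/minmax => a [b [aF bF hab]].
have [h1 h2 h3] := hcond a b aF bF hab.
by exists a, b; split.
Qed.

Lemma cnt_lt0 (H : seq nat) y lo : (forall t, t \in H -> lo <= t) -> y <= lo ->
  count (fun t => t < y) H = 0.
Proof.
move=> hH hy; apply/eqP; rewrite -leqn0 leqNgt -has_count; apply/hasPn => t /hH; lia.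
Qed.

Lemma cnt_gt0 (H : seq nat) y hi : (forall t, t \in H -> t <= hi) -> hi <= y ->
  count (fun t => y < t) H = 0.
Proof.
move=> hH hy; apply/eqP; rewrite -leqn0 leqNgt -has_count; apply/hasPn => t /hH; lia.
Qed.

Lemma notin_rng (H : seq nat) lo hi t : (forall u, u \in H -> lo <= u <= hi) ->
  ~~ (lo <= t <= hi) -> t \notin H.
Proof. by move=> hH h; apply/negP => /hH; rewrite (negbTE h). Qed.

Lemma notin_rngF (H : seq nat) lo hi t : (forall u, u \in H -> lo <= u <= hi) ->
  (t < lo) || (hi < t) -> (t \in H) = false.
Proof. by move=> hH h; apply/negP => /hH; lia. Qed.

Definition mm k n := n./2 - k + 1.

Lemma mm_facts k n : 3 <= k -> 2 * k + 1 <= n -> n + 1 <= mm k n + mm k n + 2 * k <= n + 2.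
Proof. rewrite /mm; lia. Qed.


Lemma F0_facts X x0 : uniq X -> x0 \notin X ->
  (forall t, (t \in sunion X [:: x0]) = (t == x0) || (t \in X)) /\
  (forall p : pred nat, count p (sunion X [:: x0]) = p x0 + count p X).
Proof.
move=> uX x0X; split; first by move=> t; rewrite mem_sunion inE orbC.
have dj : forall t, t \in X -> t \notin [:: x0].
  by move=> t tX; rewrite inE; apply/negP => /eqP et; move: tX; rewrite et (negbTE x0X).
by move=> p; rewrite count_sunion // /= addn0 addnC.
Qed.

Lemma arith3 k n m i x a b : 3 <= k -> 2 * k + 1 <= n -> n + 1 <= m + m + 2 * k <= n + 2 ->
  1 <= i <= m -> x <> i -> x <> i.+1 -> x <> n - i -> x <> (n - i).+1 ->
  a <= i.+1 -> (n - i).+1 <= b -> a <= x <= b -> a <= m -> a + b <= n + 1 ->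
  (a = m \/ n <= a + b) ->
  (a = x \/ a = i.+1 \/ (i + 2 <= a <= n - i - 1) \/ a = n - i \/ a = (n - i).+1) ->
  (b = x \/ b = i.+1 \/ (i + 2 <= b <= n - i - 1) \/ b = n - i \/ b = (n - i).+1) ->
  x.+1 = i.
Proof. lia. Qed.

Lemma case3 k n i H : 3 <= k -> 2 * k + 1 <= n -> 1 <= i <= n./2 - k + 1 ->
  inF (k - 2) (i + 2) (n - i - 1) H ->
  is_facet (bdry_face k n (A_n k n))
    (sunion [:: i.+1] (sunion H (itv (n - i) (n - i + 1)))).
Proof.
move=> hk hn hi hH.
have hm := mm_facts hk hn; rewrite -/(mm k n) in hi.
have -> : itv (n - i) (n - i + 1) = [:: n - i; (n - i).+1] by rewrite addn1 itv2.
have [soH szH rH plH pgH] := inF_facts hH.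
have uH : uniq H := sorted_uniq ltn_trans ltnn soH.
set X := sunion _ _.
have memX : forall t, (t \in X) = [|| t == i.+1, t \in H, t == n - i | t == (n - i).+1].
  by move=> t; rewrite /X !mem_sunion !inE.
have d1 : forall t, t \in H -> t \notin [:: n - i; (n - i).+1].
  by move=> t /rH ht; rewrite !inE; apply/negP; lia.
have d2 : forall t, t \in [:: i.+1] -> t \notin sunion H [:: n - i; (n - i).+1].
  move=> t; rewrite inE => /eqP->; rewrite mem_sunion !inE.
  have -> : (i.+1 \in H) = false by apply: (notin_rngF rH); lia.
  rewrite /=; lia.
have u2 : uniq [:: n - i; (n - i).+1] by rewrite /= inE; lia.
have cntX : forall p : pred nat, count p X = p i.+1 + count p H + p (n - i) + p (n - i).+1.
  move=> p; rewrite /X count_sunion //; last exact: uniq_sunion.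
  rewrite count_sunion //= addn0; lia.
have uX : uniq X := uniq_sunion _ _.
have szX : size X = (2 * k).-1.
  by rewrite -count_predT cntX count_predT szH /=; lia.
have iH : (i \in H) = false by apply: (notin_rngF rH); lia.
have iX : i \notin X by rewrite memX iH /=; lia.
have [memF0 cntF0] := F0_facts uX iX.
apply: (ridge hk hn (sorted_sunion _ _) szX iX).
-
  have hF : inF k 1 n (sunion X [:: i]).
    apply: inF_intro.
    + exact: sorted_sunion.
    + move=> y; rewrite memF0 memX !negb_or => /andP[/eqP y1 /and4P[/eqP y2 yH /eqP y3 /eqP y4]].
      rewrite cntF0 cntX; move: (plH y yH); clear -y1 y2 y3 y4; lia.
    + by rewrite -count_predT cntF0 count_predT szX /=; lia.
    + move=> t; rewrite memF0 memX => /orP[/eqP->|/or4P[/eqP->|/rH|/eqP->|/eqP->]];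
      clear -hi hm hk hn; lia.
  apply: (BS_intro (a := i) (b := (n - i).+1) hk hn hF);
    rewrite -/(mm k n) ?memF0 ?memX ?eqxx ?orbT //; try (clear -hi hm hk hn; lia).
  move=> t; rewrite memF0 memX => /orP[/eqP->|/or4P[/eqP->|/rH|/eqP->|/eqP->]];
    clear -hi hm hk hn; lia.
-
  move=> F hBS XF.
  have [x [xX x1n memF cntF [parl parg [a [b [aF bF hab [c1 c2 c3]]]]]]] :=
    facet_extra hk hn uX szX hBS XF.
  rewrite memF (negbTE iX) orbF; case: (eqVneq x i) => [//|/eqP xi]; exfalso.
  rewrite -/(mm k n) in c1 c3.
  have memFP : forall t, t \in F ->
      t = x \/ t = i.+1 \/ (i + 2 <= t <= n - i - 1) \/ t = n - i \/ t = (n - i).+1.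
    move=> t; rewrite memF memX => /orP[/eqP->|/or4P[/eqP->|/rH ?|/eqP->|/eqP->]];
      by [left | right; left | do 2 right; left | do 3 right; left | do 4 right].
  move: xX; rewrite memX !negb_or => /and4P[/eqP x2 xH /eqP x3 /eqP x4].
  have /andP[hi1 _] : a <= i.+1 <= b by apply: hab; rewrite memF memX eqxx orbT.
  have /andP[_ hn1] : a <= (n - i).+1 <= b by apply: hab; rewrite memF memX eqxx !orbT.
  have hx : a <= x <= b by apply: hab; rewrite memF eqxx.
  have ex := arith3 hk hn hm hi xi x2 x3 x4 hi1 hn1 hx c1 c2 c3 (memFP a aF) (memFP b bF).
  have iF : i \notin F by rewrite memF (negbTE iX) orbF eq_sym; apply/eqP.
  have c0 : count (fun t => t < i) H = 0.
    by apply: (cnt_lt0 (lo := i + 2)) => [t /rH /andP[]//|]; exact: leq_addr.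
  by move: (parl i iF); rewrite cntF cntX c0; clear -ex hi hm hk; lia.
Qed.

Lemma itv2' a b : b = a.+1 -> itv a b = [:: a; b].
Proof. by move=> ->; exact: itv2. Qed.

Lemma arith4 k n m i x a b : 3 <= k -> 2 * k + 1 <= n -> n + 1 <= m + m + 2 * k <= n + 2 ->
  1 <= i <= m -> x <> i -> x <> i.+1 -> x <> n - i - 1 -> x <> n - i ->
  a <= i -> n - i <= b -> a <= x <= b -> a <= m -> a + b <= n + 1 ->
  (a = m \/ n <= a + b) ->
  (a = x \/ a = i \/ (i + 2 <= a <= n - i - 2) \/ a = n - i - 1 \/ a = n - i) ->
  (b = x \/ b = i \/ (i + 2 <= b <= n - i - 2) \/ b = n - i - 1 \/ b = n - i) ->
  i.+1 < x.
Proof. lia. Qed.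

Lemma case4 k n i H : 3 <= k -> 2 * k + 1 <= n -> 1 <= i <= n./2 - k + 1 ->
  inF (k - 2) (i + 2) (n - i - 2) H ->
  is_facet (bdry_face k n (A_n k n))
    (sunion [:: i] (sunion H (itv (n - i - 1) (n - i)))).
Proof.
move=> hk hn hi hH.
have hm := mm_facts hk hn; rewrite -/(mm k n) in hi.
have -> : itv (n - i - 1) (n - i) = [:: n - i - 1; n - i] by apply: itv2'; lia.
have [soH szH rH plH pgH] := inF_facts hH.
have uH : uniq H := sorted_uniq ltn_trans ltnn soH.
set X := sunion _ _.
have memX : forall t, (t \in X) = [|| t == i, t \in H, t == n - i - 1 | t == n - i].
  by move=> t; rewrite /X !mem_sunion !inE.
have d1 : forall t, t \in H -> t \notin [:: n - i - 1; n - i].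
  by move=> t /rH ht; rewrite !inE; apply/negP; lia.
have d2 : forall t, t \in [:: i] -> t \notin sunion H [:: n - i - 1; n - i].
  move=> t; rewrite inE => /eqP->; rewrite mem_sunion !inE.
  have -> : (i \in H) = false by apply: (notin_rngF rH); lia.
  rewrite /=; clear -hi hm hk; lia.
have u2 : uniq [:: n - i - 1; n - i] by rewrite /= inE; clear -hi hm hk; lia.
have cntX : forall p : pred nat, count p X = p i + count p H + p (n - i - 1) + p (n - i).
  move=> p; rewrite /X count_sunion //; last exact: uniq_sunion.
  rewrite count_sunion //= addn0; lia.
have uX : uniq X := uniq_sunion _ _.
have szX : size X = (2 * k).-1.
  by rewrite -count_predT cntX count_predT szH /=; lia.
have iH : (i.+1 \in H) = false by apply: (notin_rngF rH); lia.
have iX : i.+1 \notin X by rewrite memX iH /=; clear -hi hm hk; lia.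
have [memF0 cntF0] := F0_facts uX iX.
apply: (ridge hk hn (sorted_sunion _ _) szX iX).
-
  have hF : inF k 1 n (sunion X [:: i.+1]).
    apply: inF_intro.
    + exact: sorted_sunion.
    + move=> y; rewrite memF0 memX !negb_or => /andP[/eqP y1 /and4P[/eqP y2 yH /eqP y3 /eqP y4]].
      rewrite cntF0 cntX; move: (plH y yH); clear -y1 y2 y3 y4; lia.
    + by rewrite -count_predT cntF0 count_predT szX /=; lia.
    + move=> t; rewrite memF0 memX => /orP[/eqP->|/or4P[/eqP->|/rH|/eqP->|/eqP->]];
      clear -hi hm hk hn; lia.
  apply: (BS_intro (a := i) (b := n - i) hk hn hF);
    rewrite -/(mm k n) ?memF0 ?memX ?eqxx ?orbT //; try (clear -hi hm hk hn; lia).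
  move=> t; rewrite memF0 memX => /orP[/eqP->|/or4P[/eqP->|/rH|/eqP->|/eqP->]];
    clear -hi hm hk hn; lia.
-
  move=> F hBS XF.
  have [x [xX x1n memF cntF [parl parg [a [b [aF bF hab [c1 c2 c3]]]]]]] :=
    facet_extra hk hn uX szX hBS XF.
  rewrite memF (negbTE iX) orbF; case: (eqVneq x i.+1) => [//|/eqP xi]; exfalso.
  rewrite -/(mm k n) in c1 c3.
  have memFP : forall t, t \in F ->
      t = x \/ t = i \/ (i + 2 <= t <= n - i - 2) \/ t = n - i - 1 \/ t = n - i.
    move=> t; rewrite memF memX => /orP[/eqP->|/or4P[/eqP->|/rH ?|/eqP->|/eqP->]];
      by [left | right; left | do 2 right; left | do 3 right; left | do 4 right].
  move: xX; rewrite memX !negb_or => /and4P[/eqP x2 xH /eqP x3 /eqP x4].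
  have /andP[hi1 _] : a <= i <= b by apply: hab; rewrite memF memX eqxx orbT.
  have /andP[_ hn1] : a <= n - i <= b by apply: hab; rewrite memF memX eqxx !orbT.
  have hx : a <= x <= b by apply: hab; rewrite memF eqxx.
  have ex := arith4 hk hn hm hi x2 xi x3 x4 hi1 hn1 hx c1 c2 c3 (memFP a aF) (memFP b bF).
  have iF : i.+1 \notin F by rewrite memF (negbTE iX) orbF eq_sym; apply/eqP.
  have c0 : count (fun t => t < i.+1) H = 0.
    by apply: (cnt_lt0 (lo := i + 2)) => [t /rH /andP[]//|]; rewrite addn2.
  by move: (parl i.+1 iF); rewrite cntF cntX c0; clear -ex hi hm hk; lia.
Qed.

Lemma arith2 k n m i x a b : 3 <= k -> 2 * k + 1 <= n -> n + 1 <= m + m + 2 * k <= n + 2 ->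
  1 <= i <= m -> x <> i -> x <> i.+1 -> x <> n - i - 1 -> x <> n - i ->
  a <= i -> n - i - 1 <= b -> a <= x <= b -> a <= m -> a + b <= n + 1 ->
  (a = m \/ n <= a + b) ->
  (a = x \/ a = i \/ a = i.+1 \/ (i + 2 <= a <= n - i - 2) \/ a = n - i - 1) ->
  (b = x \/ b = i \/ b = i.+1 \/ (i + 2 <= b <= n - i - 2) \/ b = n - i - 1) ->
  x = (n - i).+1 \/ (i = m /\ i + 2 <= x <= n - i - 2).
Proof. lia. Qed.

Lemma case2 k n i H : 3 <= k -> 2 * k + 1 <= n -> 1 <= i <= n./2 - k + 1 ->
  inF (k - 2) (i + 2) (n - i - 2) H ->
  is_facet (bdry_face k n (A_n k n))
    (sunion (itv i i.+1) (sunion H [:: n - i - 1])).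
Proof.
move=> hk hn hi hH.
have hm := mm_facts hk hn; rewrite -/(mm k n) in hi.
rewrite itv2.
have [soH szH rH plH pgH] := inF_facts hH.
have uH : uniq H := sorted_uniq ltn_trans ltnn soH.
set X := sunion _ _.
have memX : forall t, (t \in X) = [|| t == i, t == i.+1, t \in H | t == n - i - 1].
  by move=> t; rewrite /X !mem_sunion !inE -orbA.
have d1 : forall t, t \in H -> t \notin [:: n - i - 1].
  by move=> t /rH ht; rewrite !inE; apply/negP; lia.
have d2 : forall t, t \in [:: i; i.+1] -> t \notin sunion H [:: n - i - 1].
  have iH0 : (i \in H) = false by apply: (notin_rngF rH); lia.
  have iH1 : (i.+1 \in H) = false by apply: (notin_rngF rH); lia.
  move=> t; rewrite !inE => /orP[] /eqP->; rewrite mem_sunion !inE ?iH0 ?iH1 /=; clear -hi hm hk; lia.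
have u2 : uniq [:: i; i.+1] by rewrite /= inE; lia.
have cntX : forall p : pred nat, count p X = p i + p i.+1 + count p H + p (n - i - 1).
  move=> p; rewrite /X count_sunion //; last exact: uniq_sunion.
  rewrite count_sunion //= !addn0; lia.
have uX : uniq X := uniq_sunion _ _.
have szX : size X = (2 * k).-1.
  by rewrite -count_predT cntX count_predT szH /=; lia.
have iH : (n - i \in H) = false by apply: (notin_rngF rH); lia.
have iX : n - i \notin X by rewrite memX iH /=; clear -hi hm hk; lia.
have [memF0 cntF0] := F0_facts uX iX.
apply: (ridge hk hn (sorted_sunion _ _) szX iX).
-
  have hF : inF k 1 n (sunion X [:: n - i]).
    apply: inF_intro.
    + exact: sorted_sunion.
    + move=> y; rewrite memF0 memX !negb_or => /andP[/eqP y1 /and4P[/eqP y2 /eqP y3 yH /eqP y4]].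
      rewrite cntF0 cntX; move: (plH y yH); clear -y1 y2 y3 y4; lia.
    + by rewrite -count_predT cntF0 count_predT szX /=; lia.
    + move=> t; rewrite memF0 memX => /orP[/eqP->|/or4P[/eqP->|/eqP->|/rH|/eqP->]];
      clear -hi hm hk hn; lia.
  apply: (BS_intro (a := i) (b := n - i) hk hn hF);
    rewrite -/(mm k n) ?memF0 ?memX ?eqxx ?orbT //; try (clear -hi hm hk hn; lia).
  move=> t; rewrite memF0 memX => /orP[/eqP->|/or4P[/eqP->|/eqP->|/rH|/eqP->]];
    clear -hi hm hk hn; lia.
-
  move=> F hBS XF.
  have [x [xX x1n memF cntF [parl parg [a [b [aF bF hab [c1 c2 c3]]]]]]] :=
    facet_extra hk hn uX szX hBS XF.
  rewrite memF (negbTE iX) orbF; case: (eqVneq x (n - i)) => [//|/eqP xi]; exfalso.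
  rewrite -/(mm k n) in c1 c3.
  have memFP : forall t, t \in F ->
      t = x \/ t = i \/ t = i.+1 \/ (i + 2 <= t <= n - i - 2) \/ t = n - i - 1.
    move=> t; rewrite memF memX => /orP[/eqP->|/or4P[/eqP->|/eqP->|/rH ?|/eqP->]];
      by [left | right; left | do 2 right; left | do 3 right; left | do 4 right].
  move: xX; rewrite memX !negb_or => /and4P[/eqP x2 /eqP x3 xH /eqP x4].
  have /andP[hi1 _] : a <= i <= b by apply: hab; rewrite memF memX eqxx orbT.
  have /andP[_ hn1] : a <= n - i - 1 <= b by apply: hab; rewrite memF memX eqxx !orbT.
  have hx : a <= x <= b by apply: hab; rewrite memF eqxx.
  have [ex|[ei hx2]] := arith2 hk hn hm hi x2 x3 x4 xi hi1 hn1 hx c1 c2 c3 (memFP a aF) (memFP b bF).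
  + have iF : n - i \notin F by rewrite memF (negbTE iX) orbF eq_sym; apply/eqP.
    have c0 : count (fun t => n - i < t) H = 0.
      by apply: (cnt_gt0 (hi := n - i - 2)) => [t /rH /andP[]//|]; exact: leq_subr.
    by move: (parg (n - i) iF); rewrite cntF cntX c0; clear -ex hi hm hk; lia.
  + have sub : {subset H <= iota (i + 2) (n - i - 2 - (i + 2)).+1}.
      by move=> t /rH ht; rewrite mem_iota; clear -ht hi hm hk; lia.
    have hsz : size (iota (i + 2) (n - i - 2 - (i + 2)).+1) <= size H.
      by rewrite size_iota szH; clear -ei hi hm hk hn; lia.
    have [_ e] := uniq_min_size uH sub hsz.
    move: xH; rewrite e mem_iota; clear -hx2 hi hm hk hn; lia.
Qed.

Lemma arith1 k n m i x a b : 3 <= k -> 2 * k + 1 <= n -> n + 1 <= m + m + 2 * k <= n + 2 ->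
  1 <= i <= m -> x <> i -> x <> i.+1 -> x <> (n - i).+1 ->
  a <= i -> (n - i).+1 <= b -> a <= x <= b -> a + b <= n + 1 ->
  (a = x \/ a = i \/ a = i.+1 \/ (i + 2 <= a <= n - i) \/ a = (n - i).+1) ->
  x <= (n - i).+1.
Proof. lia. Qed.

Lemma case1 k n i H : 3 <= k -> 2 * k + 1 <= n -> 1 <= i <= n./2 - k + 1 ->
  inF (k - 2) (i + 2) (n - i) H ->
  is_facet (bdry_face k n (A_n k n))
    (sunion (itv i i.+1) (sunion H [:: n - i + 1])).
Proof.
move=> hk hn hi hH.
have hm := mm_facts hk hn; rewrite -/(mm k n) in hi.
rewrite itv2 addn1.
have [soH szH rH plH pgH] := inF_facts hH.
have uH : uniq H := sorted_uniq ltn_trans ltnn soH.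
(* the largest element of [i+2, n-i] missing from H *)
have exP : exists y, (i + 2 <= y <= n - i) && (y \notin H).
  case: (boolP (has (fun y => y \notin H) (iota (i + 2) (n - i - i - 1)))) =>
    [/hasP [y yI yH]|/hasPn hall].
  - exists y; rewrite yH andbT; move: yI; rewrite mem_iota; clear -hi hm hk hn; lia.
  - exfalso.
    have sub : {subset iota (i + 2) (n - i - i - 1) <= H} by move=> t /hall /negPn.
    have := uniq_leq_size (iota_uniq _ _) sub; rewrite size_iota szH.
    clear -hi hm hk hn; lia.
have ubP : forall y, (i + 2 <= y <= n - i) && (y \notin H) -> y <= n - i.
  by move=> y /andP[/andP[_ ->]].
case: (ex_maxnP exP ubP) => x0 /andP[hx0 x0H] hmax.
have hfill : forall y, x0 < y <= n - i -> y \in H.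
  move=> y hy; apply/negPn/negP => yH.
  have := hmax y; rewrite yH andbT.
  have -> : i + 2 <= y <= n - i by clear -hy hx0; lia.
  by move=> /(_ isT); clear -hy; lia.
set X := sunion _ _.
have memX : forall t, (t \in X) = [|| t == i, t == i.+1, t \in H | t == (n - i).+1].
  by move=> t; rewrite /X !mem_sunion !inE -orbA.
have d1 : forall t, t \in H -> t \notin [:: (n - i).+1].
  by move=> t /rH ht; rewrite !inE; apply/negP; lia.
have d2 : forall t, t \in [:: i; i.+1] -> t \notin sunion H [:: (n - i).+1].
  have iH0 : (i \in H) = false by apply: (notin_rngF rH); lia.
  have iH1 : (i.+1 \in H) = false by apply: (notin_rngF rH); lia.
  move=> t; rewrite !inE => /orP[] /eqP->; rewrite mem_sunion !inE ?iH0 ?iH1 /=; clear -hi hm hk; lia.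
have u2 : uniq [:: i; i.+1] by rewrite /= inE; lia.
have cntX : forall p : pred nat, count p X = p i + p i.+1 + count p H + p (n - i).+1.
  move=> p; rewrite /X count_sunion //; last exact: uniq_sunion.
  rewrite count_sunion //= !addn0; lia.
have uX : uniq X := uniq_sunion _ _.
have szX : size X = (2 * k).-1.
  by rewrite -count_predT cntX count_predT szH /=; lia.
have iX : x0 \notin X by rewrite memX (negbTE x0H) /=; clear -hx0 hi hm hk; lia.
have [memF0 cntF0] := F0_facts uX iX.
apply: (ridge hk hn (sorted_sunion _ _) szX iX).
-
  have hF : inF k 1 n (sunion X [:: x0]).
    apply: inF_intro.
    + exact: sorted_sunion.
    + move=> y; rewrite memF0 memX !negb_or => /andP[/eqP y1 /and4P[/eqP y2 /eqP y3 yH /eqP y4]].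
      have hy : ~~ (x0 < y <= n - i) by apply/negP => /hfill; rewrite (negbTE yH).
      rewrite cntF0 cntX; move: (plH y yH); clear -y1 y2 y3 y4 hy hx0; lia.
    + by rewrite -count_predT cntF0 count_predT szX /=; lia.
    + move=> t; rewrite memF0 memX => /orP[/eqP->|/or4P[/eqP->|/eqP->|/rH|/eqP->]];
      clear -hi hm hk hn hx0; lia.
  apply: (BS_intro (a := i) (b := (n - i).+1) hk hn hF);
    rewrite -/(mm k n) ?memF0 ?memX ?eqxx ?orbT //; try (clear -hi hm hk hn; lia).
  move=> t; rewrite memF0 memX => /orP[/eqP->|/or4P[/eqP->|/eqP->|/rH|/eqP->]];
    clear -hi hm hk hn hx0; lia.
-
  move=> F hBS XF.
  have [x [xX x1n memF cntF [parl parg [a [b [aF bF hab [c1 c2 c3]]]]]]] :=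
    facet_extra hk hn uX szX hBS XF.
  rewrite memF (negbTE iX) orbF; case: (eqVneq x x0) => [//|/eqP xi]; exfalso.
  have memFP : forall t, t \in F ->
      t = x \/ t = i \/ t = i.+1 \/ (i + 2 <= t <= n - i) \/ t = (n - i).+1.
    move=> t; rewrite memF memX => /orP[/eqP->|/or4P[/eqP->|/eqP->|/rH ?|/eqP->]];
      by [left | right; left | do 2 right; left | do 3 right; left | do 4 right].
  move: xX; rewrite memX !negb_or => /and4P[/eqP x2 /eqP x3 xH /eqP x4].
  have /andP[hi1 _] : a <= i <= b by apply: hab; rewrite memF memX eqxx orbT.
  have /andP[_ hn1] : a <= (n - i).+1 <= b by apply: hab; rewrite memF memX eqxx !orbT.
  have hx : a <= x <= b by apply: hab; rewrite memF eqxx.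
  have ex := arith1 hk hn hm hi x2 x3 x4 hi1 hn1 hx c2 (memFP a aF).
  have iF : x0 \notin F by rewrite memF (negbTE iX) orbF eq_sym; apply/eqP.
  have hlt : x0 < x.
    move: (parg x0 iF) (pgH x0 x0H); rewrite cntF cntX.
    by clear -hx0 hi hm hk hn; lia.
  have : x \in H by apply: hfill; clear -hlt ex x4; lia.
  by rewrite (negbTE xH).
Qed.

Lemma case5 k n H : 3 <= k -> 2 * k + 1 <= n ->
  inF (k - 2) 2 (n - 2) H ->
  is_facet (bdry_face k n (A_n k n)) (sunion [:: 1] (sunion H (itv (n - 1) n))).
Proof.
move=> hk hn hH.
have hm := mm_facts hk hn.
have -> : itv (n - 1) n = [:: n - 1; n] by apply: itv2'; lia.
have [soH szH rH plH pgH] := inF_facts hH.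
have uH : uniq H := sorted_uniq ltn_trans ltnn soH.
have exP : exists y, (2 <= y <= n - 2) && (y \notin H).
  case: (boolP (has (fun y => y \notin H) (iota 2 (n - 3)))) =>
    [/hasP [y yI yH]|/hasPn hall].
  - exists y; rewrite yH andbT; move: yI; rewrite mem_iota; clear -hk hn; lia.
  - exfalso.
    have sub : {subset iota 2 (n - 3) <= H} by move=> t /hall /negPn.
    have := uniq_leq_size (iota_uniq _ _) sub; rewrite size_iota szH.
    clear -hk hn; lia.
case: (ex_minnP exP) => x0 /andP[hx0 x0H] hmin.
have hfill : forall y, 2 <= y < x0 -> y \in H.
  move=> y hy; apply/negPn/negP => yH.
  have := hmin y; rewrite yH andbT.
  have -> : 2 <= y <= n - 2 by clear -hy hx0; lia.
  by move=> /(_ isT); clear -hy; lia.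
set X := sunion _ _.
have memX : forall t, (t \in X) = [|| t == 1, t \in H, t == n - 1 | t == n].
  by move=> t; rewrite /X !mem_sunion !inE.
have d1 : forall t, t \in H -> t \notin [:: n - 1; n].
  by move=> t /rH ht; rewrite !inE; apply/negP; lia.
have d2 : forall t, t \in [:: 1] -> t \notin sunion H [:: n - 1; n].
  move=> t; rewrite inE => /eqP->; rewrite mem_sunion !inE.
  have -> : (1 \in H) = false by apply: (notin_rngF rH); lia.
  rewrite /=; clear -hk hn; lia.
have u2 : uniq [:: n - 1; n] by rewrite /= inE; clear -hk hn; lia.
have cntX : forall p : pred nat, count p X = p 1 + count p H + p (n - 1) + p n.
  move=> p; rewrite /X count_sunion //; last exact: uniq_sunion.
  rewrite count_sunion //= addn0; lia.
have uX : uniq X := uniq_sunion _ _.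
have szX : size X = (2 * k).-1.
  by rewrite -count_predT cntX count_predT szH /=; lia.
have iX : x0 \notin X by rewrite memX (negbTE x0H) /=; clear -hx0 hk hn; lia.
have [memF0 cntF0] := F0_facts uX iX.
apply: (ridge hk hn (sorted_sunion _ _) szX iX).
-
  have hF : inF k 1 n (sunion X [:: x0]).
    apply: inF_intro.
    + exact: sorted_sunion.
    + move=> y; rewrite memF0 memX !negb_or => /andP[/eqP y1 /and4P[/eqP y2 yH /eqP y3 /eqP y4]].
      have hy : ~~ (2 <= y < x0) by apply/negP => /hfill; rewrite (negbTE yH).
      rewrite cntF0 cntX; move: (plH y yH); clear -y1 y2 y3 y4 hy hx0; lia.
    + by rewrite -count_predT cntF0 count_predT szX /=; lia.
    + move=> t; rewrite memF0 memX => /orP[/eqP->|/or4P[/eqP->|/rH|/eqP->|/eqP->]];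
      clear -hm hk hn hx0; lia.
  apply: (BS_intro (a := 1) (b := n) hk hn hF);
    rewrite -/(mm k n) ?memF0 ?memX ?eqxx ?orbT //; try (clear -hm hk hn; lia).
  move=> t; rewrite memF0 memX => /orP[/eqP->|/or4P[/eqP->|/rH|/eqP->|/eqP->]];
    clear -hm hk hn hx0; lia.
-
  move=> F hBS XF.
  have [x [xX x1n memF cntF [parl parg _]]] := facet_extra hk hn uX szX hBS XF.
  rewrite memF (negbTE iX) orbF; case: (eqVneq x x0) => [//|/eqP xi]; exfalso.
  move: xX; rewrite memX !negb_or => /and4P[/eqP x2 xH /eqP x3 /eqP x4].
  have iF : x0 \notin F by rewrite memF (negbTE iX) orbF eq_sym; apply/eqP.
  have hlt : x < x0.
    move: (parl x0 iF) (plH x0 x0H); rewrite cntF cntX.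
    by clear -hx0 xi hk hn; lia.
  have : x \in H by apply: hfill; clear -hlt x1n x2; lia.
  by rewrite (negbTE xH).
Qed.

Lemma arith6 k n m x a b : 3 <= k -> 2 * k + 1 <= n -> n + 1 <= m + m + 2 * k <= n + 2 ->
  x <> m -> x <> m.+1 -> a <= m.+1 -> a <= x <= b -> a <= m -> a + b <= n + 1 ->
  (a = m \/ n <= a + b) ->
  (a = x \/ a = m.+1 \/ (m.+2 <= a <= n + 1 - m)) ->
  (b = x \/ b = m.+1 \/ (m.+2 <= b <= n + 1 - m)) ->
  x.+1 = m.
Proof. lia. Qed.

Lemma case6 k n H : 3 <= k -> 2 * k + 1 <= n ->
  inF (k - 1) (n./2 - k + 3) (uphalf n + k) H ->
  is_facet (bdry_face k n (A_n k n)) (sunion [:: n./2 - k + 2] H).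
Proof.
move=> hk hn hH.
have hm := mm_facts hk hn.
have -> : n./2 - k + 2 = (mm k n).+1 by rewrite /mm; lia.
have e2 : n./2 - k + 3 = (mm k n).+2 by rewrite /mm; lia.
have e3 : uphalf n + k = n + 1 - mm k n by rewrite /mm; lia.
rewrite e2 e3 in hH; clear e2 e3.
set m := mm k n in hH hm *.
have [soH szH rH plH pgH] := inF_facts hH.
have uH : uniq H := sorted_uniq ltn_trans ltnn soH.
set X := sunion _ _.
have memX : forall t, (t \in X) = (t == m.+1) || (t \in H).
  by move=> t; rewrite /X !mem_sunion !inE.
have d2 : forall t, t \in [:: m.+1] -> t \notin H.
  have mH1 : (m.+1 \in H) = false by apply: (notin_rngF rH); lia.
  by move=> t; rewrite inE => /eqP->; rewrite mH1.
have cntX : forall p : pred nat, count p X = p m.+1 + count p H.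
  by move=> p; rewrite /X count_sunion //= addn0.
have uX : uniq X := uniq_sunion _ _.
have szX : size X = (2 * k).-1.
  by rewrite -count_predT cntX count_predT szH /=; lia.
have mH : (m \in H) = false by apply: (notin_rngF rH); lia.
have iX : m \notin X by rewrite memX mH /=; lia.
have [memF0 cntF0] := F0_facts uX iX.
apply: (ridge hk hn (sorted_sunion _ _) szX iX).
-
  have hF : inF k 1 n (sunion X [:: m]).
    apply: inF_intro.
    + exact: sorted_sunion.
    + move=> y; rewrite memF0 memX !negb_or => /andP[/eqP y1 /andP[/eqP y2 yH]].
      rewrite cntF0 cntX; move: (plH y yH); clear -y1 y2; lia.
    + by rewrite -count_predT cntF0 count_predT szX /=; lia.
    + move=> t; rewrite memF0 memX => /orP[/eqP->|/orP[/eqP->|/rH]];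
      clear -hm hk hn; lia.
  have memFP : forall t, t \in sunion X [:: m] -> t = m \/ t = m.+1 \/ (m.+2 <= t <= n + 1 - m).
    move=> t; rewrite memF0 memX => /orP[/eqP->|/orP[/eqP->|/rH ?]];
      by [left | right; left | do 2 right].
  have : sunion X [:: m] != [::] by apply/negP => /eqP e; move: (memF0 m); rewrite e eqxx.
  case/minmax => a [b [aF bF hab]].
  have /andP[ha _] : a <= m <= b by apply: hab; rewrite memF0 eqxx.
  move: (memFP a aF) (memFP b bF) => ha' hb'.
  apply: (BS_intro (a := a) (b := b) hk hn hF) => //.
    by clear -ha ha' hb' hm hk hn; lia.
  by left; rewrite -/(mm k n) -/m; clear -ha ha'; lia.
-
  move=> F hBS XF.
  have [x [xX x1n memF cntF [parl parg [a [b [aF bF hab [c1 c2 c3]]]]]]] :=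
    facet_extra hk hn uX szX hBS XF.
  rewrite memF (negbTE iX) orbF; case: (eqVneq x m) => [//|/eqP xi]; exfalso.
  rewrite -/(mm k n) -/m in c1 c3.
  have memFP : forall t, t \in F -> t = x \/ t = m.+1 \/ (m.+2 <= t <= n + 1 - m).
    move=> t; rewrite memF memX => /orP[/eqP->|/orP[/eqP->|/rH ?]];
      by [left | right; left | do 2 right].
  move: xX; rewrite memX !negb_or => /andP[/eqP x2 xH].
  have /andP[hi1 _] : a <= m.+1 <= b by apply: hab; rewrite memF memX eqxx orbT.
  have hx : a <= x <= b by apply: hab; rewrite memF eqxx.
  have ex := arith6 hk hn hm xi x2 hi1 hx c1 c2 c3 (memFP a aF) (memFP b bF).
  have iF : m \notin F by rewrite memF (negbTE iX) orbF eq_sym; apply/eqP.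
  have c0 : count (fun t => t < m) H = 0.
    by apply: (cnt_lt0 (lo := m.+2)) => [t /rH /andP[]//|]; exact: (leqW (leqnSn m)).
  by move: (parl m iF); rewrite cntF cntX c0; clear -ex; lia.
Qed.

Theorem mainTheorem3 (k n : nat) :
  3 <= k -> 2 * k + 1 <= n ->
  let C := bdry_face k n (A_n k n) in
  let m := n./2 - k + 1 in
  (forall i H, 1 <= i <= m -> inF (k - 2) (i + 2) (n - i) H ->
        is_facet C (sunion (itv i i.+1) (sunion H [:: n - i + 1]))) /\
      (forall i H, 1 <= i <= m -> inF (k - 2) (i + 2) (n - i - 2) H ->
        is_facet C (sunion (itv i i.+1) (sunion H [:: n - i - 1]))) /\
      (forall i H, 1 <= i <= m -> inF (k - 2) (i + 2) (n - i - 1) H ->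
        is_facet C (sunion [:: i.+1] (sunion H (itv (n - i) (n - i + 1))))) /\
      (forall i H, 1 <= i <= m -> inF (k - 2) (i + 2) (n - i - 2) H ->
        is_facet C (sunion [:: i] (sunion H (itv (n - i - 1) (n - i))))) /\
      (forall H, inF (k - 2) 2 (n - 2) H ->
        is_facet C (sunion [:: 1] (sunion H (itv (n - 1) n)))) /\
    (forall H, inF (k - 1) (n./2 - k + 3) (uphalf n + k) H ->
        is_facet C (sunion [:: n./2 - k + 2] H)).
Proof.
move=> hk hn C m.
split; first by move=> i H hi hH; exact: case1.
split; first by move=> i H hi hH; exact: case2.
split; first by move=> i H hi hH; exact: case3.
split; first by move=> i H hi hH; exact: case4.
split; first by move=> H hH; exact: case5.
by move=> H hH; exact: case6.
Qed.
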